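(* Let $R$ be a local ring and $s\in R$ a central element. Then $A\in M_2(R;s)$ is strongly clean if and only if one of the following holds: (1) $A\in U\big(M_2(R;s)\big)$; (2) $I_2-A\in U\big(M_2(R;s)\big)$; (3) $A$ is strongly $J$-clean in $M_2(R;s)$.
   Context: All rings are associative with identity. A ring $R$ is local if $R/J(R)$ is a division ring, where $J(R)$ is the Jacobson radical; $U(T)$ is the group of units of a ring $T$. For a ring $R$ and a central element $s\in R$, $M_2(R;s)$ denotes the ring whose elements are the $2\times 2$ arrays $\left[\begin{smallmatrix} a&b\\ c&d\end{smallmatrix}\right]$ with $a,b,c,d\in R$, with componentwise addition and multiplication $\left[\begin{smallmatrix} a&b\\ c&d\end{smallmatrix}\right]\left[\begin{smallmatrix} a'&b'\\ c'&d'\end{smallmatrix}\right]=\left[\begin{smallmatrix} aa'+s^2bc'&ab'+bd'\\ ca'+dc'&s^2cb'+dd'\end{smallmatrix}\right]$, with identity $I_2$. An element $a$ of a ring $T$ is strongly clean if there is an idempotent $e\in T$ with $ae=ea$ and $a-e\in U(T)$; it is strongly $J$-clean if there is an idempotent $e\in T$ with $ae=ea$ and $a-e\in J(T)$. *)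

(* Defs.v *)
From HB Require Import structures.
From mathcomp Require Import all_boot all_order all_algebra.
Set Implicit Arguments. Unset Strict Implicit. Unset Printing Implicit Defensive.
Import GRing.Theory.
Local Open Scope ring_scope.

Section RingNotions.
Variable T : pzRingType.

Definition is_left_ideal (I : T -> Prop) : Prop :=
  I 0 /\ (forall x y, I x -> I y -> I (x - y)) /\ (forall r x, I x -> I (r * x)).

Definition maximal_left_ideal (I : T -> Prop) : Prop :=
  is_left_ideal I /\ ~ I 1 /\
  (forall K : T -> Prop, is_left_ideal K -> (forall x, I x -> K x) -> ~ K 1 ->
     forall x, K x -> I x).

Definition jacobson (x : T) : Prop :=
  forall I : T -> Prop, maximal_left_ideal I -> I x.

Definition is_unit (x : T) : Prop := exists y : T, x * y = 1 /\ y * x = 1.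

(* T is local: T/J(T) is a division ring, i.e. the quotient is nontrivial
   (1 is not in J(T)) and every class not in J(T) (nonzero in T/J(T)) has a
   two-sided inverse in T/J(T). *)
Definition local_ring : Prop :=
  ~ jacobson 1 /\
  forall x : T, ~ jacobson x ->
    exists y : T, jacobson (x * y - 1) /\ jacobson (y * x - 1).

Definition idempotent (e : T) : Prop := e * e = e.

Definition strongly_clean (a : T) : Prop :=
  exists e : T, idempotent e /\ a * e = e * a /\ is_unit (a - e).

Definition strongly_J_clean (a : T) : Prop :=
  exists e : T, idempotent e /\ a * e = e * a /\ jacobson (a - e).

Definition central (s : T) : Prop := forall r : T, s * r = r * s.

End RingNotions.

(* An element ((a, b), (c, d)) represents the array [[a, b], [c, d]]. *)
(* The type depends on s and on the centrality proof, so that the ring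
   structure below is canonically attached to M2s R s hs. *)
Definition M2s (R : pzRingType) (s : R) (hs : central s) : Type :=
  ((R * R) * (R * R))%type.

Section M2s.
Variables (R : pzRingType) (s : R) (hs : central s).
Local Notation M2s := (@M2s R s hs).

HB.instance Definition _ := GRing.Zmodule.on M2s.

Definition M2mk (a b c d : R) : M2s := ((a, b), (c, d)).

Definition M2one : M2s := M2mk 1 0 0 1.

Definition M2mul (A B : M2s) : M2s :=
  let: ((a, b), (c, d)) := A in
  let: ((a', b'), (c', d')) := B in
  M2mk (a * a' + s ^+ 2 * b * c') (a * b' + b * d')
       (c * a' + d * c') (s ^+ 2 * c * b' + d * d').

Lemma s2C (r : R) : s ^+ 2 * r = r * s ^+ 2.
Proof. by rewrite expr2 -mulrA hs !mulrA hs. Qed.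

Lemma M2mulA : associative M2mul.
Proof.
move=> [[a b] [c d]] [[a' b'] [c' d']] [[a'' b''] [c'' d'']] /=.
rewrite /M2mk; move: (s ^+ 2) s2C => z hz; congr ((_, _), (_, _));
rewrite !(mulrDl, mulrDr, mulrA, addrA) -!hz ?mulrA; congr (_ + _);
by rewrite addrAC.
Qed.

Lemma M2mul1r : left_id M2one M2mul.
Proof.
move=> [[a b] [c d]] /=; rewrite /M2mk.
by rewrite !mul1r !mulr0 !mul0r !addr0 !add0r.
Qed.

Lemma M2mulr1 : right_id M2one M2mul.
Proof.
move=> [[a b] [c d]] /=; rewrite /M2mk.
by rewrite !mulr1 !mulr0 !addr0 !add0r.
Qed.

Lemma M2mulDl : left_distributive M2mul +%R.
Proof.
move=> [[a b] [c d]] [[a' b'] [c' d']] [[a'' b''] [c'' d'']] /=.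
rewrite /M2mk /=; congr ((_, _), (_, _));
rewrite !(mulrDl, mulrDr) -!addrA; congr (_ + _);
rewrite [RHS]addrCA; congr (_ + _); by rewrite addrC.
Qed.

Lemma M2mulDr : right_distributive M2mul +%R.
Proof.
move=> [[a b] [c d]] [[a' b'] [c' d']] [[a'' b''] [c'' d'']] /=.
rewrite /M2mk /=; congr ((_, _), (_, _));
rewrite !(mulrDl, mulrDr) -!addrA; congr (_ + _);
rewrite [RHS]addrCA; congr (_ + _); by rewrite addrC.
Qed.

HB.instance Definition _ :=
  GRing.Zmodule_isPzRing.Build M2s M2mulA M2mul1r M2mulr1 M2mulDl M2mulDr.
End M2s.

Section M2sFacts.
Variables (R : pzRingType) (s : R) (hs : central s).

Lemma M2s_oneE : (1 : @M2s R s hs) = M2mk hs 1 0 0 1.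
Proof. by []. Qed.
Lemma M2s_mulE (a b c d a' b' c' d' : R) :
  (M2mk hs a b c d * M2mk hs a' b' c' d' : @M2s R s hs) =
  M2mk hs (a * a' + s ^+ 2 * b * c') (a * b' + b * d')
          (c * a' + d * c') (s ^+ 2 * c * b' + d * d').
Proof. by []. Qed.
End M2sFacts.

(* Main.v *)
Require Import Defs.
From HB Require Import structures.
From mathcomp Require Import all_boot all_order all_algebra.
From mathcomp Require classical_sets boolp.
Import GRing.Theory.
Local Open Scope ring_scope.

Section General.
Variable T : pzRingType.

Lemma exists_maximal (L : T -> Prop) : is_left_ideal L -> ~ L 1 ->
  exists M, maximal_left_ideal M /\ forall z, L z -> M z.
Proof.
move=> [L0 [LB LM]] L1.
pose P := fun X : T -> Prop => (forall z, ~ X z) \/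
   (is_left_ideal X /\ ~ X 1 /\ forall z, L z -> X z).
have : exists A, P A /\ forall B, classical_sets.proper A B -> ~ P B.
  apply: classical_sets.Zorn_bigcup => F FP Ftot.
  case: (boolp.pselect (exists X, F X /\ exists z, X z)) => [[X0 [FX0 [z0 Xz0]]]|nF]; last first.
    left=> z [X FX Xz]; apply: nF; by exists X; split => //; exists z.
  have FPr X z : F X -> X z -> is_left_ideal X /\ ~ X 1 /\ forall z, L z -> X z.
    move=> FX Xz; case: (FP X FX) => // h; by case: (h z).
  right; split; [split; [|split]|split].
  - exists X0 => //; by have [[]] := FPr X0 z0 FX0 Xz0.
  - move=> x y [X FX Xx] [Y FY Yy].
    case: (Ftot X Y FX FY) => sub.
    + exists Y => //; have [[_ [hB _]] _] := FPr Y y FY Yy; apply: hB => //; exact: sub.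
    + exists X => //; have [[_ [hB _]] _] := FPr X x FX Xx; apply: hB => //; exact: sub.
  - move=> r x [X FX Xx]; exists X => //; have [[_ [_ hM]] _] := FPr X x FX Xx; exact: hM.
  - move=> [X FX X1]; have [_ [h _]] := FPr X 1 FX X1; exact: h.
  - move=> z Lz; exists X0 => //; have [_ [_ h]] := FPr X0 z0 FX0 Xz0; exact: h.
move=> [A [PA Amax]].
have PL : P L by right; split => //; split.
case: PA => [A0|[Aid [A1 LA]]].
  exfalso; apply: (Amax L) => //; split; first by move=> z /A0.
  by move=> /(_ 0 L0) /A0.
exists A; split => //; split => //; split => // K Kid AK K1 x Kx.
apply: boolp.contrapT => nAx; apply: (Amax K); last first.
  by right; split => //; split => // z /LA /AK.
split => //; move=> KA; exact: nAx (KA x Kx).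
Qed.

Lemma is_unit_mul (x y : T) : is_unit x -> is_unit y -> is_unit (x * y).
Proof.
move=> [x' [hx1 hx2]] [y' [hy1 hy2]]; exists (y' * x'); split.
  by rewrite mulrA -(mulrA x) hy1 mulr1.
by rewrite mulrA -(mulrA y') hx2 mulr1.
Qed.

Lemma is_unit1 : is_unit (1 : T).
Proof. by exists 1; rewrite mulr1. Qed.

Lemma jac_left_inv (x r : T) : jacobson x -> exists y, y * (1 - r * x) = 1.
Proof.
move=> Jx; apply: boolp.contrapT => nl.
pose L := fun z : T => exists t, z = t * (1 - r * x).
have [M [Mmax LM]] : exists M, maximal_left_ideal M /\ forall z, L z -> M z.
  apply: exists_maximal.
    split; first by exists 0; rewrite mul0r.
    split; first by move=> ? ? [t ->] [t' ->]; exists (t - t'); rewrite mulrBl.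
    by move=> r0 ? [t ->]; exists (r0 * t); rewrite mulrA.
  by rewrite /L => -[t ht]; apply: nl; exists t.
have Mx : M x by apply: Jx.
case: Mmax => [[M0 [MB MM]] [M1 _]].
apply: M1.
have -> : (1 : T) = (1 - r * x) - (- (r * x)) by rewrite opprK subrK.
apply: MB; first by apply: LM; exists 1; rewrite mul1r.
by rewrite -mulNr; apply: MM.
Qed.

Lemma jac_unit (x r : T) : jacobson x -> is_unit (1 - r * x).
Proof.
move=> Jx; have [y hy] := jac_left_inv x r Jx.
have Jy : y = 1 - (- (y * r)) * x.
  by rewrite mulNr opprK -{1}hy mulrBr mulr1 mulrA subrK.
have [z hz] : exists z, z * y = 1.
  by rewrite Jy; apply: jac_left_inv.
have zE : z = 1 - r * x.
  by have := congr1 (fun w => z * w) hy; rewrite /= mulrA hz mul1r mulr1.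
by exists y; split => //; rewrite -zE.
Qed.

Lemma unit_jac (x : T) : (forall r, is_unit (1 - r * x)) -> jacobson x.
Proof.
move=> H I [[I0 [IB IM]] [I1 Imax]].
apply: boolp.contrapT => nIx.
pose K := fun z => exists i t, I i /\ z = i + t * x.
have Kid : is_left_ideal K.
  split; first by exists 0, 0; rewrite mul0r addr0.
  split.
    move=> ? ? [i [t [Ii ->]]] [i' [t' [Ii' ->]]].
    exists (i - i'), (t - t'); split; first exact: IB.
    by rewrite mulrBl opprD addrACA.
  move=> r ? [i [t [Ii ->]]]; exists (r * i), (r * t); split; first exact: IM.
  by rewrite mulrDr mulrA.
have IK z : I z -> K z by move=> Iz; exists z, 0; rewrite mul0r addr0.
have K1 : K 1.
  apply: boolp.contrapT => nK1.
  by apply: nIx; apply: (Imax K Kid IK nK1); exists 0, 1; rewrite mul1r add0r.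
case: K1 => i [t [Ii ei]].
have [w [_ hw]] := H t.
apply: I1; rewrite -hw; apply: IM.
by have -> : 1 - t * x = i by rewrite ei addrK.
Qed.

Lemma is_unitN (x : T) : is_unit x -> is_unit (- x).
Proof. by move=> [y [h1 h2]]; exists (- y); rewrite !mulrNN. Qed.

Lemma unit_cancel (u y : T) : is_unit u -> u * y = u -> y = 1.
Proof.
move=> [v [_ hv]] h; have := congr1 (fun w => v * w) h.
by rewrite /= mulrA hv mul1r.
Qed.

Definition three (A : T) := [\/ is_unit A, is_unit (1 - A) | strongly_J_clean A].

Lemma jac_conj (P Q x : T) : P * Q = 1 -> Q * P = 1 -> jacobson x -> jacobson (P * x * Q).
Proof.
move=> hPQ hQP Jx; apply: unit_jac => r.
have -> : 1 - r * (P * x * Q) = P * (1 - (Q * r * P) * x) * Q.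
  rewrite mulrBr mulr1 mulrBl hPQ; congr (_ - _).
  by rewrite !mulrA hPQ mul1r.
apply: is_unit_mul; last by exists P.
apply: is_unit_mul; first by exists Q.
exact: jac_unit.
Qed.

Lemma three_conj (A A' P Q : T) : P * Q = 1 -> Q * P = 1 -> A' = Q * A * P ->
  three A' -> three A.
Proof.
move=> hPQ hQP eA.
have eA' : A = P * A' * Q by rewrite eA !mulrA hPQ mul1r -mulrA hPQ mulr1.
have uP : is_unit P by exists Q.
have uQ : is_unit Q by exists P.
case=> [uA|uA|[g [ig [cg jg]]]].
- by apply: Or31; rewrite eA'; do 2 apply: is_unit_mul => //.
- apply: Or32; have -> : 1 - A = P * (1 - A') * Q.
    by rewrite eA' mulrBr mulr1 mulrBl hPQ -!mulrA.
  by do 2 apply: is_unit_mul => //.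
apply: Or33; exists (P * g * Q); split; last split.
- rewrite /idempotent.
  by rewrite /Defs.idempotent -!mulrA (mulrA Q) hQP mul1r (mulrA g) ig.
- rewrite eA' -!mulrA (mulrA Q P) hQP mul1r (mulrA A') cg.
  by rewrite !mulrA -(mulrA _ Q P) hQP mulr1.
- have -> : A - P * g * Q = P * (A' - g) * Q by rewrite eA' mulrBr mulrBl.
  exact: jac_conj.
Qed.

Lemma Jclean_clean (A : T) : strongly_J_clean A -> strongly_clean A.
Proof.
move=> [e [ie [ce je]]]; exists (1 - e); split; last split.
- by rewrite /Defs.idempotent mulrBr mulr1 mulrBl mul1r ie subrr subr0.
- by rewrite mulrBr mulrBl mulr1 mul1r ce.
have hw : (e + e - 1) * (e + e - 1) = 1.
  rewrite mulrBr mulrBl !mulrDl !mulrDr ie !mul1r !mulr1.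
  by rewrite opprB addrK addrC subrK.
have -> : A - (1 - e) = (e + e - 1) * (1 - (- (e + e - 1)) * (A - e)).
  rewrite mulrBr mulr1 mulNr mulrN opprK mulrA hw mul1r.
  by rewrite [RHS]addrC -addrA (addrA (- e)) addKr opprB.
apply: is_unit_mul; first by exists (e + e - 1).
exact: jac_unit.
Qed.
End General.

Section Local.
Variable R : pzRingType.
Hypothesis hloc : local_ring R.
Local Notation J := (@jacobson R).

Lemma jac0 : J 0.
Proof. by move=> I [[]]. Qed.
Lemma jacB x y : J x -> J y -> J (x - y).
Proof. by move=> Jx Jy I hI; have [[_ [hB _]] _] := hI; apply: hB; [apply: Jx|apply: Jy]. Qed.
Lemma jacMl r x : J x -> J (r * x).
Proof. by move=> Jx I hI; have [[_ [_ hM]] _] := hI; apply: hM; apply: Jx. Qed.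
Lemma jacN x : J x -> J (- x).
Proof. by move=> Jx; rewrite -sub0r; apply: jacB => //; apply: jac0. Qed.
Lemma jacD x y : J x -> J y -> J (x + y).
Proof. by move=> Jx Jy; rewrite -[y]opprK; apply: jacB => //; apply: jacN. Qed.

Lemma not_jac1 : ~ J 1.
Proof. by case: hloc. Qed.

Lemma loc_dich x : is_unit x \/ J x.
Proof.
case: (boolp.pselect (J x)) => [|nJ]; first by right.
left; have [y [h1 h2]] := hloc.2 x nJ.
have u1 : is_unit (x * y).
  by have := @jac_unit R _ (-1) h1; rewrite mulN1r opprK addrC subrK.
have u2 : is_unit (y * x).
  by have := @jac_unit R _ (-1) h2; rewrite mulN1r opprK addrC subrK.
case: u1 => z [hz1 hz2]; case: u2 => w [hw1 hw2].
exists (y * z); split; first by rewrite mulrA.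
have e : w * y = y * z.
  by rewrite -[w * y]mulr1 -hz1 !mulrA -(mulrA w) hw2 mul1r.
by rewrite -e -mulrA.
Qed.

Lemma unit_jac_false x : is_unit x -> J x -> False.
Proof.
move=> [y [_ h]] Jx; apply: not_jac1; rewrite -h; exact: jacMl.
Qed.

Lemma jacMr x r : J x -> J (x * r).
Proof.
move=> Jx; case: (loc_dich (x * r)) => // -[y [h1 h2]].
exfalso.
have idem : (r * y * x) * (r * y * x) = r * y * x.
  have -> : r * y * x * (r * y * x) = r * y * ((x * r * y) * x) by rewrite !mulrA.
  by rewrite h1 mul1r.
have := @jac_unit R _ (r * y) Jx => -[z [_ hz]].
have e0 : r * y * x = 0.
  have : z * ((1 - r * y * x) * (r * y * x)) = 0.
    by rewrite mulrBl mul1r idem subrr mulr0.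
  by rewrite mulrA hz mul1r.
apply: not_jac1; rewrite -h1.
have -> : x * r * y = (x * r * y) * (x * r * y) by rewrite h1 mulr1.
have -> : x * r * y * (x * r * y) = x * (r * y * x) * r * y by rewrite !mulrA.
by rewrite e0 mulr0 !mul0r; apply: jac0.
Qed.

Lemma unitBjac u j : is_unit u -> J j -> is_unit (u - j).
Proof.
move=> Uu Jj; case: (loc_dich (u - j)) => // h; exfalso.
apply: unit_jac_false Uu _; rewrite -(subrK j u); exact: jacD.
Qed.

Lemma unitDjac u j : is_unit u -> J j -> is_unit (u + j).
Proof. by move=> Uu Jj; rewrite -[j]opprK; apply: unitBjac => //; apply: jacN. Qed.

Lemma jac_both x : J x -> J (1 - x) -> False.
Proof. by move=> h1 h2; apply: not_jac1; rewrite -(subrK x 1); apply: jacD. Qed.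

End Local.

Section M2.
Variables (R : pzRingType) (s : R) (hs : central s).
Hypothesis hloc : local_ring R.
Local Notation T := (@M2s R s hs).
Local Notation mk := (M2mk hs).
Local Notation J := (@jacobson R).
Local Notation jacMr := (@jacMr R hloc).
Local Notation unitBjac := (@unitBjac R hloc).
Local Notation jac_both := (@jac_both R hloc).
Local Notation loc_dich := (@loc_dich R hloc).
Lemma M2E (A : T) : A = mk A.1.1 A.1.2 A.2.1 A.2.2.
Proof. by case: A => [[? ?] [? ?]]. Qed.
Lemma M2addE a b c d a' b' c' d' : mk a b c d + mk a' b' c' d' = mk (a + a') (b + b') (c + c') (d + d').
Proof. by []. Qed.
Lemma M2oppE a b c d : - mk a b c d = mk (- a) (- b) (- c) (- d).
Proof. by []. Qed.
Lemma M2subE a b c d a' b' c' d' : mk a b c d - mk a' b' c' d' = mk (a - a') (b - b') (c - c') (d - d').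
Proof. by []. Qed.
Lemma M2zeroE : (0 : T) = mk 0 0 0 0.
Proof. by []. Qed.
Lemma M2mk_inj a b c d a' b' c' d' : mk a b c d = mk a' b' c' d' -> [/\ a = a', b = b', c = c' & d = d'].
Proof. by case. Qed.
Lemma M2eq a b c d a' b' c' d' : a = a' -> b = b' -> c = c' -> d = d' -> mk a b c d = mk a' b' c' d'.
Proof. by move=> -> -> -> ->. Qed.

Ltac simpl0 := rewrite ?(mulr0, mul0r, mulr1, mul1r, addr0, add0r, subr0, sub0r, oppr0).

Lemma unit_lower x : is_unit (mk 1 0 x 1).
Proof.
exists (mk 1 0 (- x) 1); rewrite !M2s_mulE M2s_oneE; split; apply: M2eq; simpl0 => //;
 by rewrite ?addNr ?addrN.
Qed.

Lemma unit_upper x : is_unit (mk 1 x 0 1).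
Proof.
exists (mk 1 (- x) 0 1); rewrite !M2s_mulE M2s_oneE; split; apply: M2eq; simpl0 => //;
 by rewrite ?addNr ?addrN.
Qed.

Lemma unit_diag x y : is_unit x -> is_unit y -> is_unit (mk x 0 0 y).
Proof.
move=> [x' [hx1 hx2]] [y' [hy1 hy2]].
by exists (mk x' 0 0 y'); rewrite !M2s_mulE M2s_oneE; split; apply: M2eq; simpl0.
Qed.

Lemma U1 p q r t pi : p * pi = 1 -> pi * p = 1 -> is_unit (t - s ^+ 2 * r * pi * q) ->
  is_unit (mk p q r t).
Proof.
move=> h1 h2 hS.
have -> : mk p q r t = mk 1 0 (r * pi) 1 * mk p 0 0 (t - s ^+ 2 * r * pi * q) * mk 1 (pi * q) 0 1.
  rewrite !M2s_mulE; apply: M2eq; simpl0 => //.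
  - by rewrite mulrA h1 mul1r.
  - by rewrite -mulrA h2 mulr1.
  - by rewrite -(mulrA r) h2 mulr1 !mulrA addrC subrK.
apply: is_unit_mul; last exact: unit_upper.
apply: is_unit_mul; first exact: unit_lower.
apply: unit_diag => //; by exists pi.
Qed.

Lemma U2 p q r t ti : t * ti = 1 -> ti * t = 1 -> is_unit (p - s ^+ 2 * q * ti * r) ->
  is_unit (mk p q r t).
Proof.
move=> h1 h2 hS.
have -> : mk p q r t = mk 1 (q * ti) 0 1 * mk (p - s ^+ 2 * q * ti * r) 0 0 t * mk 1 0 (ti * r) 1.
  rewrite !M2s_mulE; apply: M2eq; simpl0 => //.
  - by rewrite -(mulrA q) h2 mulr1 !mulrA subrK.
  - by rewrite -mulrA h2 mulr1.
  - by rewrite mulrA h1 mul1r.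
apply: is_unit_mul; last exact: unit_lower.
apply: is_unit_mul; first exact: unit_upper.
apply: unit_diag => //; by exists ti.
Qed.

Lemma jacM3 x y z : J y -> J (x * y * z).
Proof. by move=> Jy; apply: jacMr => //; apply: jacMl. Qed.

Lemma U1J p q r t : is_unit p -> J r -> is_unit t -> is_unit (mk p q r t).
Proof.
move=> [pi [h1 h2]] Jr ut; apply: (U1 _ _ _ _ _ h1 h2); apply: unitBjac => //.
by apply: jacMr => //; apply: jacMr => //; apply: jacMl.
Qed.

Lemma allJ x1 x2 x3 x4 : J x1 -> J x2 -> J x3 -> J x4 -> jacobson (mk x1 x2 x3 x4).
Proof.
move=> j1 j2 j3 j4; apply: unit_jac => r; rewrite [r]M2E.
rewrite M2s_mulE M2s_oneE M2subE; apply: U1J.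
- by apply: unitBjac; [exact: is_unit1| apply: jacD; [apply: jacMl|apply: jacMl]].
- by rewrite sub0r; apply: jacN; apply: jacD; apply: jacMl.
- by apply: unitBjac; [exact: is_unit1| apply: jacD; [apply: jacMl|apply: jacMl]].
Qed.

Definition E11 : T := mk 1 0 0 0.
Definition E22 : T := mk 0 0 0 1.

Lemma idem_eqs {a b c d} : Defs.idempotent (mk a b c d) ->
  [/\ a * a + s ^+ 2 * b * c = a, a * b + b * d = b,
      c * a + d * c = c & s ^+ 2 * c * b + d * d = d].
Proof. by rewrite /Defs.idempotent M2s_mulE => /M2mk_inj. Qed.

Lemma oneB a b c d : 1 - mk a b c d = mk (1 - a) (- b) (- c) (1 - d).
Proof. by rewrite M2s_oneE M2subE !sub0r. Qed.

Lemma idem_zero {a b c d} : Defs.idempotent (mk a b c d) -> J a -> J d -> mk a b c d = 0.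
Proof.
move=> ie Ja Jd; have [e1 e2 e3 e4] := idem_eqs ie.
have [w [hw1 hw2]] : is_unit (1 - a) by apply: unitBjac => //; exact: is_unit1.
have Jc : J c.
  have ec : c * (1 - a) = d * c by rewrite mulrBr mulr1 -{1}e3 addrAC subrr add0r.
  have -> : c = d * c * w by rewrite -ec -mulrA hw1 mulr1.
  by apply: jacMr; apply: jacMr.
have u : is_unit (1 - mk a b c d).
  rewrite oneB; apply: U1J.
  - by apply: unitBjac => //; exact: is_unit1.
  - by apply: jacN.
  - by apply: unitBjac => //; exact: is_unit1.
have : mk a b c d * (1 - mk a b c d) = 0 by rewrite mulrBr mulr1 ie subrr.
case: u => v [hv1 _] h.
by rewrite -[mk a b c d]mulr1 -hv1 mulrA h mul0r.
Qed.

Definition iconcl (e : T) := e = 0 \/ e = 1 \/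
  exists P Q : T, [/\ P * Q = 1, Q * P = 1 & e * P = P * E11 \/ e * P = P * E22].

Lemma schur_one (z a b c d ai : R) : (forall r, z * r = r * z) -> a * ai = 1 ->
  is_unit (1 - d) -> c * a + d * c = c -> z * c * b + d * d = d ->
  (1 - d) - z * c * ai * (- b) = 1.
Proof.
move=> hz ha1 ud e3 e4.
apply: (unit_cancel _ _ _ ud).
have e3' : (1 - d) * c = c * a by rewrite mulrBl mul1r -{1}e3 addrK.
have x1 : (1 - d) * (z * c * ai * b) = d - d * d.
  have -> : (1 - d) * (z * c * ai * b) = z * ((1 - d) * c) * ai * b.
    by rewrite !mulrA -(hz (1 - d)).
  rewrite e3' (mulrA _ c a) -(mulrA _ a ai) ha1 mulr1 -{1}e4.
  by rewrite addrK.
rewrite mulrN opprK mulrDr x1 mulrBl mul1r mulrBr mulr1.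
by rewrite subrK.
Qed.

Lemma caseE11 a b c d : Defs.idempotent (mk a b c d) -> is_unit a -> is_unit (1 - d) ->
  iconcl (mk a b c d).
Proof.
move=> ie ua ud; have [e1 e2 e3 e4] := idem_eqs ie.
right; right.
have [ai [ha1 ha2]] := ua.
have S1 : (1 - d) - s ^+ 2 * c * ai * (- b) = 1.
  apply: (schur_one (s ^+ 2) a b c d ai) => //; move=> r; exact: s2C.
have uP : is_unit (mk a (- b) c (1 - d)).
  by apply: (U1 _ _ _ _ _ ha1 ha2); rewrite S1; exact: is_unit1.
have [Q [hQ1 hQ2]] := uP.
exists (mk a (- b) c (1 - d)), Q; split => //; left.
rewrite /E11 !M2s_mulE; apply: M2eq; simpl0 => //.
  + by rewrite mulrN mulrBr mulr1 -{2}e2 addrK addNr.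
  + by rewrite mulrBr mulr1 mulrN -{1}e4 addrK addNr.
Qed.

Lemma caseE22 a b c d : Defs.idempotent (mk a b c d) -> is_unit d -> is_unit (1 - a) ->
  iconcl (mk a b c d).
Proof.
move=> ie ud' ua'; have [e1 e2 e3 e4] := idem_eqs ie.
right; right.
have [di [hd1 hd2]] := ud'.
have S1 : (1 - a) - s ^+ 2 * b * di * (- c) = 1.
  apply: (schur_one (s ^+ 2) d c b a di) => //; [move=> r; exact: s2C| by rewrite addrC| by rewrite addrC].
have uP : is_unit (mk (1 - a) b (- c) d).
  by apply: (U2 _ _ _ _ _ hd1 hd2); rewrite S1; exact: is_unit1.
have [Q [hQ1 hQ2]] := uP.
exists (mk (1 - a) b (- c) d), Q; split => //; right.
rewrite /E22 !M2s_mulE; apply: M2eq; simpl0 => //.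
  + by rewrite mulrN mulrBr mulr1 -{1}e1 addrAC addrK subrr.
  + by rewrite mulrBr mulr1 mulrN -{1}e3 addrAC addrK subrr.
Qed.

Lemma case1 a b c d : Defs.idempotent (mk a b c d) -> J (1 - a) -> J (1 - d) ->
  iconcl (mk a b c d).
Proof.
move=> ie Ja Jd; right; left.
have ie' : Defs.idempotent (mk (1 - a) (- b) (- c) (1 - d)).
  by rewrite -oneB /Defs.idempotent mulrBr mulr1 mulrBl mul1r ie subrr subr0.
have := idem_zero ie' Ja Jd; rewrite -oneB => /eqP; rewrite subr_eq0 => /eqP.
by move=> <-.
Qed.

Lemma idem_class e : Defs.idempotent e -> iconcl e.
Proof.
rewrite [e]M2E; set a := e.1.1; set b := e.1.2; set c := e.2.1; set d := e.2.2.
move=> ie.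
case: (loc_dich a) => [ua|Ja]; case: (loc_dich (1 - d)) => [ud|Jd].
- exact: caseE11.
- case: (loc_dich d) => [ud'|Jd']; last by case: (jac_both _ Jd' Jd).
  case: (loc_dich (1 - a)) => [ua'|Ja']; first exact: caseE22.
  exact: case1.
- case: (loc_dich (1 - a)) => [ua'|Ja']; last by case: (jac_both _ Ja Ja').
  case: (loc_dich d) => [ud'|Jd']; first exact: caseE22.
  by left; apply: idem_zero.
- case: (loc_dich (1 - a)) => [ua'|Ja']; last by case: (jac_both _ Ja Ja').
  case: (loc_dich d) => [ud'|Jd']; first exact: caseE22.
  by case: (jac_both _ Jd' Jd).
Qed.

Lemma E11_idem : Defs.idempotent E11.
Proof. by rewrite /Defs.idempotent /E11 M2s_mulE; apply: M2eq; simpl0. Qed.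
Lemma E22_idem : Defs.idempotent E22.
Proof. by rewrite /Defs.idempotent /E22 M2s_mulE; apply: M2eq; simpl0. Qed.

Lemma comm_E11 (X : T) : X * E11 = E11 * X -> X = mk X.1.1 0 0 X.2.2.
Proof.
case: X => [[a b] [c d]] /=; rewrite /E11.
change ((a, b), (c, d)) with (mk a b c d).
rewrite !M2s_mulE => /M2mk_inj; simpl0 => -[_ hb hc _].
by rewrite -hb hc.
Qed.

Lemma comm_E22 (X : T) : X * E22 = E22 * X -> X = mk X.1.1 0 0 X.2.2.
Proof.
case: X => [[a b] [c d]] /=; rewrite /E22.
change ((a, b), (c, d)) with (mk a b c d).
rewrite !M2s_mulE => /M2mk_inj; simpl0 => -[_ hb hc _].
by rewrite hb -hc.
Qed.

Lemma unit1B x : J x -> is_unit (1 - x).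
Proof. by move=> Jx; apply: unitBjac => //; exact: is_unit1. Qed.

Lemma diag3 x y : three _ (mk x 0 0 y).
Proof.
have U2c : is_unit (1 - x) -> is_unit (1 - y) -> three _ (mk x 0 0 y).
  by move=> h1 h2; apply: Or32; rewrite oneB oppr0; apply: unit_diag.
case: (loc_dich x) => [ux|Jx]; case: (loc_dich y) => [uy|Jy].
- by apply: Or31; exact: unit_diag.
- case: (loc_dich (1 - x)) => [ux'|Jx']; first by apply: U2c => //; apply: unit1B.
  apply: Or33; exists E11; split; first exact: E11_idem.
  split; first by rewrite /E11 !M2s_mulE; apply: M2eq; simpl0.
  rewrite /E11 M2subE !subr0; apply: allJ => //; try exact: jac0.
  by rewrite -opprB; apply: jacN.
- case: (loc_dich (1 - y)) => [uy'|Jy']; first by apply: U2c => //; apply: unit1B.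
  apply: Or33; exists E22; split; first exact: E22_idem.
  split; first by rewrite /E22 !M2s_mulE; apply: M2eq; simpl0.
  rewrite /E22 M2subE !subr0; apply: allJ => //; try exact: jac0.
  by rewrite -opprB; apply: jacN.
- by apply: U2c; apply: unit1B.
Qed.

Lemma main (A : T) : strongly_clean A <-> three _ A.
Proof.
split.
- move=> [e [ie [ce ue]]].
  case: (idem_class _ ie) => [e0|[e1|[P [Q [hPQ hQP hE]]]]].
  + by apply: Or31; move: ue; rewrite e0 subr0.
  + apply: Or32; rewrite -opprB; apply: is_unitN; by rewrite -e1.
  + apply: (three_conj _ _ (Q * A * P) P Q hPQ hQP erefl).
    have key : forall E : T, e * P = P * E -> (Q * A * P) * E = E * (Q * A * P).
      move=> E h.
      have hQe : Q * e = E * Q.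
        by rewrite -[Q * e]mulr1 -hPQ mulrA -(mulrA Q) h !mulrA hQP mul1r.
      have -> : Q * A * P * E = Q * (A * e) * P by rewrite -mulrA -h !mulrA.
      rewrite ce.
      have -> : Q * (e * A) * P = (Q * e) * A * P by rewrite !mulrA.
      by rewrite hQe !mulrA.
    case: hE => h.
    * by rewrite (comm_E11 _ (key _ h)); apply: diag3.
    * by rewrite (comm_E22 _ (key _ h)); apply: diag3.
- case=> [uA|uA|jA].
  + exists 0; split; first by rewrite /Defs.idempotent mul0r.
    by split; [rewrite mul0r mulr0 | rewrite subr0].
  + exists 1; split; first by rewrite /Defs.idempotent mul1r.
    split; first by rewrite mul1r mulr1.
    by rewrite -opprB; apply: is_unitN.
  + exact: Jclean_clean.
Qed.
End M2.

Theorem theorem2p13 (R : pzRingType) (s : R) (hs : central s) :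
  local_ring R ->
  forall A : M2s hs,
    strongly_clean A <->
    [\/ is_unit A, is_unit (1 - A) | strongly_J_clean A].
Proof. by move=> hloc A; apply: main. Qed.
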